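(* Let $A:\mathbb{R}^n\rightrightarrows\mathbb{R}^n$ be maximally monotone, let $x^*$ satisfy $0\in A(x^* )$, and let $\tilde A=I-J_A$ with $J_A=(I+A)^{-1}$; assume $\tilde A$ is differentiable. Let $X:[0,\infty)\to\mathbb{R}^n$ be continuous with $X(0)=x_0$, twice continuously differentiable on $(0,\infty)$, and a solution of $$\ddot X+\frac{2}{t}\dot X+\frac{2}{t}\tilde A(X)+2\nabla\tilde A(X)\dot X=0,\qquad t>0,$$ in the integrated form $t\dot X(t)+X(t)+2t\tilde A(X(t))=x_0$ for all $t>0$. Then for every $t>0$, $$\|\tilde A(X(t))\|^2\leqslant\frac{\|x_0-x^*\|^2}{t^2+2t},\qquad \langle\tilde A(X(t)),X(t)-x^*\rangle\leqslant\frac{\|x_0-x^*\|^2}{2t}.$$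
   Context: $J_A$ is the resolvent of $A$ and $\tilde A=I-J_A$ its Yosida approximation; $\nabla\tilde A$ denotes the Jacobian of $\tilde A$. The paper states that, with $X(0)=x_0$, the second-order ODE is equivalent to the first-order equation $t\dot X+X+2t\tilde A(X)=x_0$. *)

(* Defs.v *)
From HB Require Import structures.
From mathcomp Require Import all_boot all_order all_algebra.
From mathcomp Require Import all_classical all_reals all_analysis.
Set Implicit Arguments. Unset Strict Implicit. Unset Printing Implicit Defensive.
Import Order.TTheory GRing.Theory Num.Theory.
Import numFieldNormedType.Exports.
Local Open Scope classical_set_scope.
Local Open Scope ring_scope.

Definition dotv {R : realType} {n : nat} (u v : 'rV[R]_n) : R := (u *m v^T) 0 0.

(* A set-valued operator A : R^n ⇉ R^n is a map x |-> A x (a set);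
   u ∈ A x is written A x u. *)
Definition monotone_op {R : realType} {n : nat} (A : 'rV[R]_n -> set 'rV[R]_n) :=
  forall x y u v, A x u -> A y v -> 0 <= dotv (x - y) (u - v).

Definition maximally_monotone {R : realType} {n : nat} (A : 'rV[R]_n -> set 'rV[R]_n) :=
  monotone_op A /\
  forall B : 'rV[R]_n -> set 'rV[R]_n, monotone_op B ->
    (forall x u, A x u -> B x u) -> forall x u, B x u -> A x u.

(* J is the resolvent J_A = (I + A)^{-1}, as a (single-valued, everywhere
   defined) map:  y = J x  <->  x ∈ y + A y. *)
Definition is_resolvent {R : realType} {n : nat} (A : 'rV[R]_n -> set 'rV[R]_n)
  (J : 'rV[R]_n -> 'rV[R]_n) := forall x y, y = J x <-> A y (x - y).

Definition yosida {R : realType} {n : nat} (J : 'rV[R]_n -> 'rV[R]_n) : 'rV[R]_n -> 'rV[R]_n :=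
  fun x => x - J x.

(* Main.v *)
Require Import Defs.
From HB Require Import structures.
From mathcomp Require Import all_boot all_order all_algebra.
From mathcomp Require Import all_classical all_reals all_analysis.
From mathcomp Require Import ring lra.
Import Order.TTheory GRing.Theory Num.Theory.
Import numFieldNormedType.Exports.
Local Open Scope classical_set_scope.
Local Open Scope ring_scope.

Section Dot.
Context {R : realType} {n : nat}.
Implicit Types u v w : 'rV[R]_n.

Lemma dotvE u v : dotv u v = \sum_(j < n) u 0 j * v 0 j.
Proof. by rewrite /dotv mxE; apply: eq_bigr => j _; rewrite mxE. Qed.

Lemma dotvC u v : dotv u v = dotv v u.
Proof. by rewrite !dotvE; apply: eq_bigr => j _; rewrite mulrC. Qed.

Lemma dotvDl u v w : dotv (u + v) w = dotv u w + dotv v w.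
Proof. by rewrite !dotvE -big_split; apply: eq_bigr => j _; rewrite mxE mulrDl. Qed.

Lemma dotvZl (k : R) u w : dotv (k *: u) w = k * dotv u w.
Proof. by rewrite !dotvE mulr_sumr; apply: eq_bigr => j _; rewrite mxE mulrA. Qed.

Lemma dotvNl u w : dotv (- u) w = - dotv u w.
Proof. by rewrite -scaleN1r dotvZl mulN1r. Qed.

Lemma dotvBl u v w : dotv (u - v) w = dotv u w - dotv v w.
Proof. by rewrite dotvDl dotvNl. Qed.

Lemma dotvDr u v w : dotv w (u + v) = dotv w u + dotv w v.
Proof. by rewrite dotvC dotvDl !(dotvC w). Qed.
Lemma dotvZr (k : R) u w : dotv w (k *: u) = k * dotv w u.
Proof. by rewrite dotvC dotvZl dotvC. Qed.
Lemma dotvBr u v w : dotv w (u - v) = dotv w u - dotv w v.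
Proof. by rewrite dotvC dotvBl !(dotvC w). Qed.
Lemma dotvNr u w : dotv w (- u) = - dotv w u.
Proof. by rewrite dotvC dotvNl dotvC. Qed.
Lemma dotv0l w : dotv 0 w = 0.
Proof. by rewrite -(scale0r (0 : 'rV[R]_n)) dotvZl mul0r. Qed.

Lemma dotv_ge0 u : 0 <= dotv u u.
Proof. by rewrite dotvE; apply: sumr_ge0 => j _; rewrite -expr2 sqr_ge0. Qed.

Lemma is_derive_dotv (F G : R -> 'rV[R]_n) t :
  derivable F t 1 -> derivable G t 1 ->
  is_derive t 1 (fun s => dotv (F s) (G s))
     (dotv ('D_1 F t) (G t) + dotv (F t) ('D_1 G t)).
Proof.
move=> dF dG.
have -> : (fun s => dotv (F s) (G s)) = \sum_(j < n) (fun s => F s 0 j * G s 0 j).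
  by apply: funext => s; rewrite dotvE fct_sumE.
have dFj j : derivable (fun s => F s 0 j) t 1 by move/derivable_mxP: dF; apply.
have dGj j : derivable (fun s => G s 0 j) t 1 by move/derivable_mxP: dG; apply.
apply: (@is_derive_eq _ R R).
  apply: is_derive_sum => j.
  exact: (is_deriveM (derivableP (dFj j)) (derivableP (dGj j))).
rewrite !dotvE -big_split; apply: eq_bigr => j _ /=.
rewrite (derive_mx dF) (derive_mx dG) !mxE /=.
by rewrite addrC /GRing.scale /= mulrC [G t 0 j * _]mulrC.
Qed.

End Dot.

Section Yos.
Context {R : realType} {n : nat} (A : 'rV[R]_n -> set 'rV[R]_n) (J : 'rV[R]_n -> 'rV[R]_n).
Hypothesis monoA : monotone_op A.
Hypothesis resJ : is_resolvent A J.
Local Notation Y := (yosida J).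

Lemma yos_fne x y : dotv (Y x - Y y) (Y x - Y y) <= dotv (x - y) (Y x - Y y).
Proof.
have Ax : A (J x) (Y x) by apply/(resJ x (J x)).
have Ay : A (J y) (Y y) by apply/(resJ y (J y)).
have := monoA _ _ _ _ Ax Ay.
have -> : x - y = (J x - J y) + (Y x - Y y) by rewrite /yosida addrACA (addrC (J x)) addrNK opprB addKr.
rewrite (dotvDl (J x - J y)); lra.
Qed.

Lemma yos_mono x y : 0 <= dotv (x - y) (Y x - Y y).
Proof. exact: le_trans (dotv_ge0 _) (yos_fne x y). Qed.

Lemma yos_zero xs : A xs 0 -> Y xs = 0.
Proof.
move=> Axs; have : xs = J xs by apply/(resJ xs xs); rewrite subrr.
by rewrite /yosida => {1}->; rewrite subrr.
Qed.

Lemma derive_line (f : 'rV[R]_n -> 'rV[R]_n) x v :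
  'D_v f x = 'D_1 (fun h : R => f (h *: v + x)) 0.
Proof.
rewrite /derive. f_equal. f_equal. apply: funext => h /=.
by rewrite addr0 scale0r add0r [_%:A]mulr1.
Qed.

Lemma yos_dpos x w : differentiable Y x -> 0 <= dotv ('d Y x w) w.
Proof.
move=> dY; rewrite -deriveE // derive_line.
set F := fun h : R => Y (h *: w + x).
have dF : derivable F 0 1.
  exact: (iffLR (derivable1P Y x w) (@diff_derivable _ _ _ Y x w dY)).
have dG : derivable (fun _ : R => w) (0:R) 1 by exact: derivable_cst.
have := @is_derive_dotv R n F (fun _ => w) 0 dF dG.
rewrite (_ : 'D_1 (fun _ : R => w) 0 = 0); last first.
  by have := derive_cst w (0:R) 1.
rewrite (_ : dotv (F 0) 0 = 0); last by rewrite dotvC dotv0l.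
rewrite addr0 => D.
rewrite -(@derive_val _ _ _ _ _ _ _ D).
rewrite /derive; apply: limr_ge; first exact: (@ex_derive _ _ _ _ _ _ _ D).
apply: nearW => h /=.
rewrite /F /= !addr0 scale0r add0r [_%:A]mulr1.
have := yos_mono (h *: w + x) x.
rewrite addrK dotvZl -dotvBl dotvC.
set q := dotv _ w => hq.
rewrite /GRing.scale /=.
have [->|h0] := eqVneq h 0; first by rewrite invr0 mul0r.
have -> : h^-1 * q = (h^-1)^+2 * (h * q) by rewrite expr2 -!mulrA mulKf.
by apply: mulr_ge0 => //; rewrite sqr_ge0.
Qed.

End Yos.

Lemma dot_cont {R : realType} {n : nat} (c u : 'rV[R]_n) :
  {for u, continuous (fun v : 'rV[R]_n => dotv (v - c) (v - c))}.
Proof.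
apply: differentiable_continuous.
have -> : (fun v : 'rV[R]_n => dotv (v - c) (v - c)) =
   \sum_(j < n) (fun v : 'rV[R]_n => (v 0 j - c 0 j) * (v 0 j - c 0 j)).
  apply: funext => v; rewrite dotvE fct_sumE; apply: eq_bigr => j _.
  by rewrite !mxE.
apply: differentiable_sum => j.
have H : differentiable (fun v : 'rV[R]_n => v 0 j - c 0 j) u.
  exact: (differentiableB (differentiable_coord u 0 j) (differentiable_cst (c 0 j) u)).
exact: (differentiableM H H).
Qed.

Lemma g_deriv {R : realType} {n : nat} (Y : 'rV[R]_n -> 'rV[R]_n) (X : R -> 'rV[R]_n)
  (x0 : 'rV[R]_n) (s : R) :
  (forall x, differentiable Y x) -> derivable X s 1 ->
  s *: 'D_1 X s + X s + (2 * s) *: Y (X s) = x0 ->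
  is_derive s 1
    (fun s => s * dotv (Y (X s)) (x0 - X s) - s * (s * dotv (Y (X s)) (Y (X s))))
    (s ^+ 2 * dotv ('d Y (X s) ('D_1 X s)) ('D_1 X s)).
Proof.
move=> dY dX eqI.
set w := 'D_1 X s.
set a := fun s => Y (X s).
have dXd : differentiable X s by apply/derivable1_diffP.
have ad : differentiable a s by exact: (differentiable_comp dXd (dY (X s))).
have da : derivable a s 1 by apply/derivable1_diffP.
have Da : 'D_1 a s = 'd Y (X s) w.
  by rewrite deriveE // /a -/(Y \o X) diff_comp //= /w deriveE.
have DV := is_deriveB (is_derive_cst x0 s 1) (derivableP dX).
have dV : derivable (fun s => x0 - X s) s 1 := @ex_derive _ _ _ _ _ _ _ DV.
have DVv : 'D_1 (fun s => x0 - X s) s = 0 - w := @derive_val _ _ _ _ _ _ _ DV.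
have P1 := @is_derive_dotv R n a (fun s => x0 - X s) s da dV.
have P2 := @is_derive_dotv R n a a s da da.
have T := is_deriveB (is_deriveM (is_derive_id s 1) P1)
   (is_deriveM (is_derive_id s 1) (is_deriveM (is_derive_id s 1) P2)).
apply: (is_derive_eq T).
rewrite DVv Da.
have E : x0 - X s = s *: w + (2 * s) *: a s.
  by rewrite -eqI (addrAC (s *: _)) addrK.
rewrite E sub0r (dotvC (a s) (- w)) dotvNl (dotvC (a s) ('d Y (X s) w)).
rewrite !(dotvDr, dotvZr) (dotvC w (a s)).
rewrite /GRing.scale /= !mulr1.
change ((id * _) s) with (s * dotv (a s) (a s)); ring.
Qed.

Theorem theorem9 (R : realType) (n : nat) (A : 'rV[R]_n -> set 'rV[R]_n)
  (J : 'rV[R]_n -> 'rV[R]_n) (xstar x0 : 'rV[R]_n) (X : R -> 'rV[R]_n) :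
  maximally_monotone A ->
  A xstar 0 ->
  is_resolvent A J ->
  (forall x, differentiable (yosida J) x) ->
  {within `[0, +oo[, continuous X} ->
  X 0 = x0 ->
  (forall t, 0 < t -> derivable X t 1) ->
  (forall t, 0 < t -> derivable (derive1 X) t 1) ->
  (forall t, 0 < t -> {for t, continuous (derive1n 2 X)}) ->
  (forall t, 0 < t ->
     derive1n 2 X t + (2 / t) *: derive1 X t + (2 / t) *: yosida J (X t)
       + 2 *: ('d (yosida J) (X t) (derive1 X t)) = 0) ->
  (forall t, 0 < t -> t *: derive1 X t + X t + (2 * t) *: yosida J (X t) = x0) ->
  forall t, 0 < t ->
    dotv (yosida J (X t)) (yosida J (X t)) <= dotv (x0 - xstar) (x0 - xstar) / (t ^+ 2 + 2 * t)
    /\ dotv (yosida J (X t)) (X t - xstar) <= dotv (x0 - xstar) (x0 - xstar) / (2 * t).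
Proof.
move=> [monoA _] Axs resJ dY cX X0 dX _ _ _ eqI t t0.
set Y := yosida J.
have Ys0 : Y xstar = 0 by exact: (@yos_zero R n A J resJ xstar Axs).
have fne x : dotv (Y x) (Y x) <= dotv (Y x) (x - xstar).
  by have := @yos_fne R n A J monoA resJ x xstar; rewrite -/Y Ys0 subr0 (dotvC (x - xstar)).
pose g s := s * dotv (Y (X s)) (x0 - X s) - s * (s * dotv (Y (X s)) (Y (X s))).
have gD (s : R) : 0 < s -> is_derive s 1 g
    (s ^+ 2 * dotv ('d Y (X s) ('D_1 X s)) ('D_1 X s)).
  move=> s0; apply: g_deriv => //; first exact: dX.
  by rewrite -derive1E; exact: eqI.
have gmono (s : R) : 0 < s -> s <= t -> g s <= g t.
  move=> s0 st.
  apply: (@ger0_derive1_ndecr _ g s t) => //.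
  - move=> x; rewrite in_itv /= => /andP[sx _].
    exact: (@ex_derive _ _ _ _ _ _ _ (gD x (lt_trans s0 sx))).
  - move=> x; rewrite in_itv /= => /andP[sx _].
    have x0' := lt_trans s0 sx.
    rewrite derive1E (@derive_val _ _ _ _ _ _ _ (gD x x0')).
    apply: mulr_ge0; first exact: sqr_ge0.
    exact: (@yos_dpos R n A J monoA resJ _ _ (dY _)).
  - apply: derivable_within_continuous => x; rewrite in_itv /= => /andP[sx _].
    exact: (@ex_derive _ _ _ _ _ _ _ (gD x (lt_le_trans s0 sx))).
have gpos : 0 <= g t.
  have cX0 : X x @[x --> 0^'+] --> X 0 := ((continuous_within_itvcyP 0 X).1 cX).2.
  pose P1 := fun v : 'rV[R]_n => dotv (v - xstar) (v - xstar).
  pose P2 := fun v : 'rV[R]_n => dotv (v - x0) (v - x0).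
  have c1 : (P1 \o X) @ 0^'+ --> P1 (X 0) .
    by apply: continuous_cvg; [exact: dot_cont | exact: cX0].
  have c2 : (P2 \o X) @ 0^'+ --> P2 (X 0) .
    by apply: continuous_cvg; [exact: dot_cont | exact: cX0].
  set M1 := P1 (X 0) + 1.
  set M2 := P2 (X 0) + 1.
  have M1p : 0 < M1 by rewrite /M1 /P1; have := dotv_ge0 (X 0 - xstar); lra.
  have M2p : 0 < M2 by rewrite /M2 /P2; have := dotv_ge0 (X 0 - x0); lra.
  apply/ler_addgt0Pr => e e0.
  set K := 2 * (M1 + M2) + 1.
  have K0 : 0 < K by rewrite /K; lra.
  have L1 : \forall s \near 0^'+, P1 (X s) <= M1.
    by apply: (@cvgr_le _ _ _ _ _ _ c1 M1); rewrite /M1; lra.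
  have L2 : \forall s \near 0^'+, P2 (X s) <= M2.
    by apply: (@cvgr_le _ _ _ _ _ _ c2 M2); rewrite /M2; lra.
  near (0:R)^'+ => s.
  have s0 : 0 < s by near: s; exact: nbhs_right_gt.
  have st : s <= t by near: s; exact: nbhs_right_le.
  have s1 : s <= 1 by near: s; exact: nbhs_right_le.
  have se : s <= e / K by near: s; apply: nbhs_right_le; exact: divr_gt0.
  have b1 : P1 (X s) <= M1 by near: s; exact: L1.
  have b2 : P2 (X s) <= M2 by near: s; exact: L2.
  have gm := gmono s s0 st.
  have sK : s * K <= e by rewrite -(ler_pdivlMr _ _ K0).
  suff : - e <= g s by lra.
  have E : x0 - X s = - (X s - x0) by rewrite opprB.
  rewrite /g E dotvNr.
  have F := fne (X s).
  have P := dotv_ge0 (Y (X s)).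
  have Q1 := dotv_ge0 (Y (X s) - (X s - xstar)).
  have Q2 := dotv_ge0 (Y (X s) - (X s - x0)).
  move: b1 b2 F P Q1 Q2; rewrite /P1 /P2.
  move: (Y (X s)) (X s - xstar) (X s - x0) => a z v.
  rewrite !(dotvBl, dotvBr, dotvDl, dotvDr) (dotvC z a) (dotvC v a).
  move=> b1 b2 F P Q1 Q2.
  have h1 : 0 <= s * (M1 - dotv a a) by apply: mulr_ge0; lra.
  have h2 : 0 <= s * ((M1 + M2) / 2 - dotv a v) by apply: mulr_ge0; lra.
  have h3 : 0 <= s * ((1 - s) * dotv a a) by apply: mulr_ge0 => //; apply: mulr_ge0; lra.
  rewrite /K in sK.
  have h4 : 0 <= s * M1 by apply: mulr_ge0; lra.
  have h5 : 0 <= s * M2 by apply: mulr_ge0; lra.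
  lra.
move: gpos; rewrite /g.
have -> : x0 - X t = (x0 - xstar) - (X t - xstar) by rewrite opprB addrA subrK.
have F := fne (X t).
have P := dotv_ge0 (Y (X t)).
have Q := dotv_ge0 ((x0 - xstar) - t *: Y (X t)).
move: F P Q.
move: (Y (X t)) (X t - xstar) (x0 - xstar) => a z u.
rewrite !(dotvBl, dotvBr, dotvZl, dotvZr) (dotvC a u).
move=> F P Q G.
have tq : 0 <= t * (dotv a z - dotv a a) by apply: mulr_ge0; lra.
split.
  rewrite ler_pdivlMr; last by rewrite addr_gt0 // ?exprn_gt0 // mulr_gt0.
  nra.
rewrite ler_pdivlMr; last by rewrite mulr_gt0.
nra.
Unshelve. all: by end_near.
Qed.
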